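(* Let $(U,\mathcal{I})$ be a matroid, $f:2^U\to\mathbb{R}_{\ge0}$ a non-negative, monotonically non-decreasing submodular function, and $p\in(0,1)$. The triple of sets $(H,M,N)$ produced by $\mathrm{SIMULATE}$ has the same joint distribution as the triple $(H,M,N)$ produced by $\mathrm{ONLINE}$ (with the same $p$) when the elements of $U$ arrive in a uniformly random order.
   Context: Notation: $n=|U|$; $f_T(e)=f(T\cup\{e\})-f(T)$. All argmax choices below break ties by a fixed rule. $\mathrm{GREEDY}(H)$ for $H\subseteq U$: start with $T=\emptyset$; while some $e\in H\setminus T$ has $T\cup\{e\}\in\mathcal{I}$, add such an $e$ maximizing $f_T(e)$; return $T$. $\mathrm{ONLINE}$: draw $m\sim\mathrm{Binom}(n,p)$; let $H$ be the set of the first $m$ arriving elements (all rejected); $M=\mathrm{GREEDY}(H)$; $N=\emptyset$; for each subsequent arriving $e$, if $\mathrm{GREEDY}(H\cup\{e\})\neq\mathrm{GREEDY}(H)$ then add $e$ to $N$ (and accept it if it keeps the accepted set independent). $\mathrm{SIMULATE}$: each element of $U$ is independently put into $H$ with probability $p$. Start with $M=N=\emptyset$. While there exists $e\in U\setminus(M\cup N)$ with $M\cup\{e\}\in\mathcal{I}$, take such an $e$ maximizing $f_M(e)$; if $e\in H$ add it to $M$, otherwise add it to $N$. *)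

(* Defs.v *)
From mathcomp Require Import all_boot all_order fingroup perm all_algebra.
Set Implicit Arguments. Unset Strict Implicit. Unset Printing Implicit Defensive.
Import Order.TTheory GRing.Theory Num.Theory.
Local Open Scope ring_scope.

Section Defs.
Variables (R : realFieldType) (U : finType).

Definition is_matroid (I : {set {set U}}) : Prop :=
  [/\ set0 \in I,
      (forall A B : {set U}, B \in I -> A \subset B -> A \in I) &
      (forall A B : {set U}, A \in I -> B \in I -> (#|A| < #|B|)%N ->
         exists2 x, x \in B :\: A & x |: A \in I)].

Definition nonneg_fun (f : {set U} -> R) : Prop := forall A, 0 <= f A.
Definition monotone_fun (f : {set U} -> R) : Prop :=
  forall A B : {set U}, A \subset B -> f A <= f B.
Definition submodular (f : {set U} -> R) : Prop :=
  forall A B : {set U}, f (A :|: B) + f (A :&: B) <= f A + f B.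

Variables (I : {set {set U}}) (f : {set U} -> R) (rk : U -> nat).

Definition marg (T : {set U}) (e : U) : R := f (e |: T) - f T.

(* argmax of f_T over the candidate set C, ties broken by the fixed rule
   "smaller rank rk first" (rk is assumed injective). *)
Definition best (T C : {set U}) : option U :=
  [pick e in C | [forall e' in C,
     (marg T e' < marg T e) || ((marg T e' == marg T e) && (rk e <= rk e')%N)]].

Fixpoint greedy_iter (H : {set U}) (k : nat) (T : {set U}) : {set U} :=
  match k with
  | 0 => T
  | k'.+1 =>
    match best T [set e in H :\: T | e |: T \in I] with
    | None => T
    | Some e => greedy_iter H k' (e |: T)
    end
  end.

(* GREEDY(H); each step adds a new element, so #|U| iterations suffice. *)
Definition GREEDY (H : {set U}) : {set U} := greedy_iter H #|U| set0.

Fixpoint simulate_iter (H : {set U}) (k : nat) (MN : {set U} * {set U})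
  : {set U} * {set U} :=
  match k with
  | 0 => MN
  | k'.+1 =>
    match best MN.1 [set e | (e \notin MN.1 :|: MN.2) && (e |: MN.1 \in I)] with
    | None => MN
    | Some e =>
      simulate_iter H k'
        (if e \in H then (e |: MN.1, MN.2) else (MN.1, e |: MN.2))
    end
  end.

Definition SIMULATE (H : {set U}) : {set U} * {set U} * {set U} :=
  let MN := simulate_iter H #|U| (set0, set0) in (H, MN.1, MN.2).

Definition arrival (s : {perm U}) : seq U := map s (enum U).

Definition ONLINE (s : {perm U}) (m : nat) : {set U} * {set U} * {set U} :=
  let H := [set x in take m (arrival s)] in
  let N := [set e in drop m (arrival s) | GREEDY (e |: H) != GREEDY H] in
  (H, GREEDY H, N).

(* Pr[ SIMULATE outputs t ]: each element of U is in H independently w.p. p *)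
Definition prob_SIMULATE (p : R) (t : {set U} * {set U} * {set U}) : R :=
  \sum_(H : {set U})
     (p ^+ #|H| * (1 - p) ^+ (#|U| - #|H|)) * (SIMULATE H == t)%:R.

(* Pr[ ONLINE outputs t ]: uniformly random arrival order, independent
   m ~ Binom(#|U|, p). *)
Definition prob_ONLINE (p : R) (t : {set U} * {set U} * {set U}) : R :=
  \sum_(s : {perm U}) \sum_(m < #|U|.+1)
     (#|{perm U}|%:R)^-1
     * ('C(#|U|, m)%:R * p ^+ m * (1 - p) ^+ (#|U| - m))
     * (ONLINE s m == t)%:R.

End Defs.

(* Main.v *)
Require Import Defs.
From mathcomp Require Import all_boot all_order fingroup perm all_algebra.
Set Implicit Arguments. Unset Strict Implicit. Unset Printing Implicit Defensive.
From mathcomp Require Import ring.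
Import Order.TTheory GRing.Theory Num.Theory.

Section Cnt.
Local Open Scope group_scope.
Variable U : finType.

Lemma arrival_uniq (s : {perm U}) : uniq (arrival s).
Proof. by rewrite /arrival map_inj_uniq ?enum_uniq //; apply: perm_inj. Qed.

Lemma mem_arrival (s : {perm U}) x : x \in arrival s.
Proof. by apply/mapP; exists (s^-1 x); rewrite ?mem_enum ?permKV. Qed.

Lemma size_arrival (s : {perm U}) : size (arrival s) = #|U|.
Proof. by rewrite /arrival size_map cardE. Qed.

Definition Hs (s : {perm U}) m := [set x in take m (arrival s)].

Lemma card_Hs (s : {perm U}) m : m <= #|U| -> #|Hs s m| = m.
Proof.
move=> hm; rewrite /Hs cardsE; move/card_uniqP: (take_uniq m (arrival_uniq s)) => ->.
by rewrite size_takel // size_arrival.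
Qed.

Definition A0 k : {set U} := [set x in take k (enum U)].

Lemma Hs_imset (s : {perm U}) m : Hs s m = s @: A0 m.
Proof.
apply/setP=> x; rewrite /Hs /A0 inE /arrival -map_take.
by apply/mapP/imsetP; case=> y yl ->; exists y => //; move: yl; rewrite inE.
Qed.

Lemma mem_drop_take_gen (l : seq U) m (x : U) : uniq l -> x \in l ->
  (x \in drop m l) = (x \notin take m l).
Proof.
rewrite -{1 2}(cat_take_drop m l) cat_uniq mem_cat => /and3P[_ hd _].
case/orP=> [xt|xd]; first by rewrite xt; apply/negP=> xd; case/negP: hd; apply/hasP; exists x.
by rewrite xd; apply/esym/negP => xt; case/negP: hd; apply/hasP; exists x.
Qed.

Lemma mem_drop_take (s : {perm U}) m (x : U) :
  (x \in drop m (arrival s)) = (x \notin take m (arrival s)).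
Proof. exact: mem_drop_take_gen (arrival_uniq s) (mem_arrival s x). Qed.

Lemma exists_perm (A H : {set U}) : #|A| = #|H| -> exists t : {perm U}, t @: A = H.
Proof.
move=> cAH.
pose la := enum A ++ enum (~: A); pose lb := enum H ++ enum (~: H).
have ula : uniq la by rewrite cat_uniq !enum_uniq /= andbT; apply/hasPn=> x; rewrite !mem_enum inE => ->.
have ulb : uniq lb by rewrite cat_uniq !enum_uniq /= andbT; apply/hasPn=> x; rewrite !mem_enum inE => ->.
have mla : forall x, x \in la by move=> x; rewrite mem_cat !mem_enum inE orbN.
have sz : size la = size lb by rewrite !size_cat -!cardE !cardsC.
pose g x := nth x lb (index x la).
have ilt : forall x, index x la < size lb by move=> x; rewrite -sz index_mem.
have g_inj : injective g.
  move=> x y; rewrite /g (set_nth_default y) // => /eqP; rewrite nth_uniq // => /eqP e.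
  by rewrite -(nth_index x (mla x)) -(nth_index x (mla y)) e.
exists (perm g_inj).
apply/eqP; rewrite eqEcard card_imset ?cAH ?leqnn ?andbT; last exact: perm_inj.
apply/subsetP=> y /imsetP [x xA ->]; rewrite permE /g.
have ix : index x la < size (enum H).
  by rewrite /la index_cat mem_enum xA -cardE -cAH cardE index_mem mem_enum.
by rewrite /lb nth_cat ix -(mem_enum (mem H)) mem_nth.
Qed.

Definition cnt (A H : {set U}) := #|[set s : {perm U} | s @: A == H]|.

Lemma cnt_le (A B C : {set U}) (t : {perm U}) : t @: B = C -> cnt A B <= cnt A C.
Proof.
move=> tBC; rewrite /cnt -(card_imset _ (mulIg t)).
apply: subset_leq_card; apply/subsetP=> y /imsetP [s]; rewrite inE => /eqP sAB ->.
rewrite inE -tBC -sAB -imset_comp; apply/eqP/eq_imset => x /=; by rewrite permM.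
Qed.

Lemma cnt_eq (A H : {set U}) : #|A| = #|H| -> cnt A H = cnt A A.
Proof.
move=> /exists_perm [t tAH]; apply/eqP; rewrite eqn_leq.
rewrite (cnt_le A tAH) andbT.
apply: (@cnt_le A H A t^-1); rewrite -tAH -imset_comp.
by rewrite (eq_imset (g := id)) ?imset_id // => x /=; rewrite permK.
Qed.

Lemma cnt_sum (A : {set U}) :
  ('C(#|U|, #|A|) * cnt A A)%N = #|{perm U}|.
Proof.
transitivity (\sum_(H in [set H : {set U} | #|H| == #|A|]) cnt A H)%N.
  rewrite -card_draws -sum_nat_const; apply: eq_bigr => H; rewrite inE => /eqP.
  by move=> /esym/cnt_eq.
rewrite -[RHS]sum1_card.
rewrite (@partition_big _ _ _ _ _ _ _ (fun s : {perm U} => s @: A) (mem [set H : {set U} | #|H| == #|A|])) /=.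
  by apply: eq_bigr => H _; rewrite /cnt -sum1_card; apply: eq_bigl => s; rewrite !inE.
by move=> s _; rewrite inE card_imset //; apply: perm_inj.
Qed.

End Cnt.

Local Open Scope ring_scope.
Section Comb.
Variables (R : realFieldType) (U : finType) (I : {set {set U}})
  (f : {set U} -> R) (rk : U -> nat).
Hypothesis rk_inj : injective rk.

Definition better (T : {set U}) : rel U := fun e e' =>
  (marg f T e' < marg f T e) || ((marg f T e' == marg f T e) && (rk e <= rk e')%N).

Lemma better_total T : total (better T).
Proof.
move=> x y; rewrite /better.
case: (ltgtP (marg f T x) (marg f T y)) => //= _.
exact: leq_total.
Qed.

Lemma better_trans T : transitive (better T).
Proof.
move=> y x z; rewrite /better.
case/orP=> [lt1|/andP[/eqP e1 l1]]; case/orP=> [lt2|/andP[/eqP e2 l2]].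
- by rewrite (lt_trans lt2 lt1).
- by rewrite e2 lt1.
- by rewrite -e1 lt2.
- by rewrite e2 e1 eqxx (leq_trans l1 l2) orbT.
Qed.

Lemma better_anti T x y : better T x y -> better T y x -> x = y.
Proof.
rewrite /better.
case/orP=> [lt1|/andP[/eqP e1 l1]]; case/orP=> [lt2|/andP[/eqP e2 l2]].
- by move: (lt_trans lt1 lt2); rewrite ltxx.
- by move: lt1; rewrite e2 ltxx.
- by move: lt2; rewrite e1 ltxx.
- by apply: rk_inj; apply/eqP; rewrite eqn_leq l1 l2.
Qed.

Lemma bestE (T C : {set U}) : best f rk T C = [pick e in C | [forall e' in C, better T e e']].
Proof. by []. Qed.

Lemma best_spec (T C : {set U}) e : best f rk T C = Some e ->
  e \in C /\ forall e', e' \in C -> better T e e'.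
Proof.
rewrite bestE; case: pickP => // x /andP[xC /forall_inP H] [<-]; split=> //.
Qed.

Lemma best_none (T C : {set U}) : best f rk T C = None -> C = set0.
Proof.
rewrite bestE; case: pickP => // H _.
apply/setP=> x; rewrite inE; apply/negbTE/negP=> xC.
pose s := sort (better T) (enum C).
have : x \in s by rewrite mem_sort mem_enum.
case Es: s => [|y s'] //= _.
have yC : y \in C by rewrite -mem_enum -(mem_sort (better T)) -/s Es mem_head.
have := H y; rewrite yC /=; move/negP; apply; apply/forall_inP=> z zC.
have : z \in s by rewrite mem_sort mem_enum.
rewrite Es inE => /orP[/eqP->|zs'].
  by case/orP: (better_total T y y).
have hs : sorted (better T) s by apply: sort_sorted; apply: better_total.
rewrite Es /= in hs.
have := order_path_min (@better_trans T) hs.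
by move/allP/(_ z zs').
Qed.

Lemma best_sub T C (C' : {set U}) e : best f rk T C = Some e -> e \in C' -> C' \subset C ->
  best f rk T C' = Some e.
Proof.
move=> /best_spec [eC He] eC' sub.
case E: (best f rk T C') => [e2|].
  have [e2C' He2] := best_spec E.
  by congr Some; apply: better_anti (He2 _ eC') (He _ (subsetP sub _ e2C')).
by move: (best_none E) => E0; rewrite E0 inE in eC'.
Qed.

Definition cand (H T : {set U}) := [set e in H :\: T | e |: T \in I].

Lemma greedy_sup (H : {set U}) k (T : {set U}) : T \subset greedy_iter I f rk H k T.
Proof.
elim: k T => [|k IH] T //=.
case: best => [e|] //.
by apply: subset_trans (IH _); apply: subsetUr.
Qed.

Lemma greedy_sub (H : {set U}) k (T : {set U}) : greedy_iter I f rk H k T \subset H :|: T.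
Proof.
elim: k T => [|k IH] T /=; first exact: subsetUr.
case E: best => [e|]; last exact: subsetUr.
have [eC _] := best_spec E; move: eC; rewrite inE => /andP[]; rewrite inE => /andP[_ eH] _.
apply: subset_trans (IH _) _.
by rewrite subUset subsetUl /= subUset sub1set inE eH subsetUr.
Qed.

Lemma greedy_stop (H : {set U}) k (T : {set U}) : cand H T = set0 -> greedy_iter I f rk H k T = T.
Proof.
move=> E; case: k => //= k; rewrite -/(cand H T) E.
case E2: best => [e|] //; have [] := best_spec E2; by rewrite inE.
Qed.

Lemma greedy_fuel (H : {set U}) k (T : {set U}) : (#|H :\: T| <= k)%N ->
  greedy_iter I f rk H k.+1 T = greedy_iter I f rk H k T.
Proof.
elim: k T => [|k IH] T hk.
  rewrite /= ; case E: best => [e|] //.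
  have [eC _] := best_spec E; move: eC; rewrite inE => /andP[eHT _].
  by move: hk; rewrite leqn0 cards_eq0 => /eqP E0; rewrite E0 inE in eHT.
rewrite [LHS]/= [RHS]/=; case E: best => [e|] //.
have [eC _] := best_spec E; move: eC; rewrite inE => /andP[eHT _].
apply: IH; rewrite -ltnS; apply: leq_trans hk.
rewrite (cardsD1 e (H :\: T)) eHT add1n ltnS.
apply: subset_leq_card; apply/subsetP=> x; rewrite !inE negb_or.
by case/andP=> [/andP[-> ->] ->].
Qed.

Definition gr (H T : {set U}) := greedy_iter I f rk H #|U| T.

Lemma gr_step (H T : {set U}) e : best f rk T (cand H T) = Some e -> gr H T = gr H (e |: T).
Proof.
move=> E; have [eC _] := best_spec E; move: eC; rewrite inE => /andP[eHT _].
rewrite /gr; have : (0 < #|U|)%N by apply/card_gt0P; exists e.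
case EU: #|U| => [|n] // _.
transitivity (greedy_iter I f rk H n (e |: T)); first by rewrite /= -/(cand H T) E.
rewrite greedy_fuel //.
rewrite -ltnS -EU; apply: leq_trans (max_card (mem (H :\: T))).
rewrite (cardsD1 e (H :\: T)) eHT add1n ltnS.
apply: subset_leq_card; apply/subsetP=> x; rewrite !inE negb_or.
by case/andP=> [/andP[-> ->] ->].
Qed.

Lemma gr_stop (H T : {set U}) : cand H T = set0 -> gr H T = T.
Proof. exact: greedy_stop. Qed.

Definition candU (M N : {set U}) := [set e | (e \notin M :|: N) && (e |: M \in I)].

Definition Inv (H M N : {set U}) :=
  [/\ [disjoint N & H], gr H set0 = gr H M,
      (forall e, e \notin N -> gr (e |: H) set0 = gr (e |: H) M) &
      (forall e, e \in N -> e \in gr (e |: H) set0)].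

Definition Final (H : {set U}) (MN : {set U} * {set U}) :=
  MN.1 = gr H set0 /\
  MN.2 = [set e in ~: H | gr (e |: H) set0 != gr H set0].

Lemma cand_candU (H' M N : {set U}) : [disjoint N & H'] -> cand H' M \subset candU M N.
Proof.
move=> dis; apply/subsetP=> x; rewrite !inE => /andP[/andP[xM xH] ->].
rewrite negb_or xM andbT /=; apply/negP=> xN.
by move: (disjointFr dis xN); rewrite xH.
Qed.

Lemma Inv_final (H M N : {set U}) : Inv H M N -> candU M N = set0 -> Final H (M, N).
Proof.
move=> [dis g0 gN gIn] E0.
have cH : cand H M = set0.
  by apply/eqP; rewrite -subset0 -E0; apply: cand_candU.
have gM : gr H set0 = M by rewrite g0 gr_stop.
split=> //=; apply/setP=> e; rewrite !inE gM.
case eN: (e \in N).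
  have eH : e \notin H by rewrite (disjointFr dis) // ; move: (disjointFl dis eN) => ->.
  rewrite eH /=; apply/esym/negP=> /eqP E.
  have := gIn e eN; rewrite E => eM.
  have := greedy_sub H #|U| set0; rewrite -/(gr _ _) gM setU0 => /subsetP/(_ e eM).
  by rewrite (negbTE eH).
case eH: (e \in H) => //=.
rewrite gN ?eN // gr_stop ?eqxx //.
apply/eqP; rewrite -subset0 -E0; apply/subsetP=> x; rewrite !inE.
case/andP=> [/andP[xM xeH] ->]; rewrite negb_or xM /= andbT.
case/orP: xeH => [/eqP->|xH]; first by rewrite eN.
by rewrite (disjointFl dis xH).
Qed.

Lemma disjP (A B : {set U}) : reflect (forall x, x \in A -> x \notin B) [disjoint A & B].
Proof.
rewrite -setI_eq0; apply: (iffP eqP) => [E x xA|H].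
  apply/negP => xB; have: x \in A :&: B by rewrite inE xA xB.
  by rewrite E inE.
apply/setP => x; rewrite !inE; case xA: (x \in A) => //=; exact/negbTE/H.
Qed.

Lemma candU_sub (M N : {set U}) : candU M N \subset ~: (M :|: N).
Proof. by apply/subsetP=> x; rewrite !inE => /andP[]. Qed.

Lemma sim_main (H : {set U}) k (M N : {set U}) : (#|~: (M :|: N)| <= k)%N ->
  Inv H M N -> Final H (simulate_iter I f rk H k (M, N)).
Proof.
elim: k M N => [|k IH] M N hk hI.
  apply: Inv_final => //; apply/eqP; rewrite -subset0.
  apply: subset_trans (candU_sub M N) _.
  by move: hk; rewrite leqn0 cards_eq0 => /eqP ->.
rewrite [simulate_iter _ _ _ _ _ _]/= -/(candU M N).
case E: best => [x|]; last by apply: Inv_final => //; apply: best_none E.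
have [xC _] := best_spec E.
move: (xC); rewrite inE => /andP[xMN xI].
move: hI => [dis g0 gN gIn].
have dH' : forall e, e \notin N -> [disjoint N & e |: H].
  move=> e eN; apply/disjP => y yN; rewrite !inE negb_or (disjointFr dis yN) andbT.
  by apply/eqP => ye; rewrite -ye yN in eN.
have stepH : forall H' : {set U}, x \in H' -> [disjoint N & H'] -> gr H' M = gr H' (x |: M).
  move=> H' xH' dis'; apply: gr_step; apply: (best_sub E); last exact: cand_candU.
  by rewrite !inE xI andbT xH'; move: xMN; rewrite inE negb_or => /andP[->].
have fuel : forall M' N' : {set U}, x \in M' :|: N' -> M :|: N \subset M' :|: N' ->
    (#|~: (M' :|: N')| <= k)%N.
  move=> M' N' xin sub; rewrite -ltnS; apply: leq_trans hk.
  apply: proper_card; rewrite properC; apply/properP; split=> //.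
  by exists x => //; move: xMN; rewrite inE.
case xH: (x \in H).
  apply: IH.
    by apply: fuel; rewrite ?inE ?eqxx //; apply: setSU; apply: subsetUr.
  split=> //.
  - by rewrite g0; apply: stepH.
  - move=> e eN; rewrite gN // stepH // ?inE ?xH ?orbT //; exact: dH'.
apply: IH.
  apply: fuel; first by rewrite !inE eqxx orbT.
  by apply: setUS; apply: subsetUr.
split=> //.
- apply/disjP=> y; rewrite !inE => /orP[/eqP->|yN]; first by rewrite xH.
  by rewrite (disjointFr dis yN).
- by move=> e; rewrite !inE negb_or => /andP[_]; apply: gN.
move=> e; rewrite !inE => /orP[/eqP->|]; last exact: gIn.
have xN : x \notin N by move: xMN; rewrite !inE negb_or => /andP[_].
rewrite gN // (stepH (x |: H)) ?dH' // ?setU11 //.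
by apply: (subsetP (greedy_sup _ _ _)); rewrite setU11.
Qed.

Lemma simulate_char (H : {set U}) :
  SIMULATE I f rk H = (H, GREEDY I f rk H,
     [set e in ~: H | GREEDY I f rk (e |: H) != GREEDY I f rk H]).
Proof.
have hI : Inv H set0 set0.
  split=> //; first by apply/disjP=> y; rewrite inE.
  by move=> e; rewrite inE.
have [E1 E2] := @sim_main H #|U| set0 set0 (max_card _) hI.
by rewrite /SIMULATE /= E1 E2.
Qed.


Lemma online_char (s : {perm U}) m :
  ONLINE I f rk s m = SIMULATE I f rk (Hs s m).
Proof.
rewrite simulate_char /ONLINE /Hs; congr (_, _, _); apply/setP => e; rewrite !inE.
by rewrite mem_drop_take.
Qed.

End Comb.

Lemma sum_ind (U : finType) (R : realFieldType) (H : {set U}) k :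
  \sum_(s : {perm U}) ((Hs s k == H)%:R : R) = (cnt (A0 U k) H)%:R.
Proof.
rewrite /cnt -sum1_card natr_sum [RHS]big_mkcond /=; apply: eq_bigr => s _.
by rewrite inE Hs_imset; case: (_ == _).
Qed.

Lemma card_A0 (U : finType) k : (k <= #|U|)%N -> #|A0 U k| = k.
Proof.
move=> hk; rewrite /A0 cardsE; move/card_uniqP: (take_uniq k (enum_uniq (mem U))) => ->.
by rewrite size_takel // -cardE.
Qed.

Theorem lemma1 (R : realFieldType) (U : finType) (I : {set {set U}})
  (f : {set U} -> R) (rk : U -> nat) (p : R) :
  is_matroid I -> nonneg_fun f -> monotone_fun f -> submodular f ->
  injective rk -> 0 < p < 1 ->
  forall t : {set U} * {set U} * {set U},
    prob_SIMULATE I f rk p t = prob_ONLINE I f rk p t.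
Proof.
move=> _ _ _ _ rk_inj _ t.
rewrite /prob_SIMULATE /prob_ONLINE.
set n := #|U|.
have key : forall H : {set U}, p ^+ #|H| * (1 - p) ^+ (n - #|H|) =
   \sum_(s : {perm U}) \sum_(m < n.+1) (#|{perm U}|%:R)^-1
     * ('C(n, m)%:R * p ^+ m * (1 - p) ^+ (n - m)) * (Hs s m == H)%:R.
  move=> H; set k := #|H|.
  have hk : (k < n.+1)%N by rewrite ltnS max_card.
  rewrite (eq_bigr (fun s => (#|{perm U}|%:R)^-1
     * ('C(n, k)%:R * p ^+ k * (1 - p) ^+ (n - k)) * (Hs s k == H)%:R)); last first.
    move=> s _; rewrite (bigD1 (Ordinal hk)) //= big1 ?addr0 //.
    move=> m mk; have -> : (Hs s m == H) = false; last by rewrite mulr0.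
    apply/negP => /eqP E; case/negP: mk; apply/eqP/val_inj => /=.
    by rewrite /k -E card_Hs // -ltnS.
  rewrite -big_distrr /= sum_ind cnt_eq; last by rewrite card_A0 // -ltnS.
  have hc := cnt_sum (A0 U k); rewrite card_A0 -/n in hc; last by rewrite -ltnS.
  have hP : (#|{perm U}|%:R : R) = 'C(n, k)%:R * (cnt (A0 U k) (A0 U k))%:R by rewrite -hc natrM.
  rewrite hP.
  have hC : ('C(n, k)%:R : R) != 0 by rewrite pnatr_eq0 -lt0n bin_gt0 -ltnS.
  have hN : ((cnt (A0 U k) (A0 U k))%:R : R) != 0.
    rewrite pnatr_eq0 -lt0n; apply/card_gt0P; exists 1%g; rewrite inE.
    by apply/eqP/setP=> x; apply/imsetP/idP => [[y yA ->]|xA]; [rewrite perm1 | exists x; rewrite ?perm1].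
  have alg : forall a b x y : R, a != 0 -> b != 0 -> x * y = (a * b)^-1 * (a * x * y) * b.
    move=> a b x y ha hb; field.
    by rewrite ha hb.
  exact: alg.
transitivity (\sum_(H : {set U}) \sum_(s : {perm U}) \sum_(m < n.+1) (#|{perm U}|%:R)^-1
     * ('C(n, m)%:R * p ^+ m * (1 - p) ^+ (n - m)) * (Hs s m == H)%:R * (SIMULATE I f rk H == t)%:R).
  apply: eq_bigr => H _; rewrite key big_distrl /=; apply: eq_bigr => s _.
  by rewrite big_distrl.
rewrite exchange_big; apply: eq_bigr => s _ /=; rewrite exchange_big; apply: eq_bigr => m _ /=.
rewrite (bigD1 (Hs s m)) //= eqxx mulr1 big1 ?addr0 ?online_char //.
by move=> H; rewrite eq_sym => /negbTE ->; rewrite mulr0 mul0r.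
Qed.
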